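(* Let $-\infty<t_1<t_2<+\infty$, $b>1$, and let $z\in\mathbb{C}$ with $\operatorname{Im}z>0$ satisfy $\bigl|z-\frac{t_1+t_2}2\bigr|\ge b\,\frac{t_2-t_1}2$. Then $$\omega(z,[t_1,t_2])\ge\frac{b-1}{2\pi b}\,\frac{(t_2-t_1)\operatorname{Im}z}{|z|^2-\operatorname{Re}z\,(t_1+t_2)+t_1t_2}\ge\frac{b-1}{2\pi b}\,\frac{(t_2-t_1)\operatorname{Im}z}{(|z|+|t_1|)(|z|+|t_2|)}.$$
   Context: For $z$ with $\operatorname{Im}z>0$ and Borel $B\subset\mathbb{R}$, $\omega(z,B)=\frac1\pi\int_B\frac{\operatorname{Im}z}{(t-\operatorname{Re}z)^2+(\operatorname{Im}z)^2}dt$ is the harmonic measure of the upper half-plane. *)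

(* Defs.v *)
From Stdlib Require Import Reals.
From Coquelicot Require Import Coquelicot.
Open Scope R_scope.

Definition poisson (x y t : R) : R := / PI * (y / ((t - x) ^ 2 + y ^ 2)).

(* Harmonic measure of the interval [t1,t2] (t1 <= t2) seen from z = x + i y:
   omega(z,[t1,t2]) = (1/pi) int_{t1}^{t2} y / ((t-x)^2+y^2) dt.
   The integrand is continuous, so the Riemann integral coincides with the
   Lebesgue integral over the Borel set [t1,t2]. *)
Definition omega_interval (x y t1 t2 : R) : R := RInt (poisson x y) t1 t2.

Definition cmod (x y : R) : R := sqrt (x ^ 2 + y ^ 2).

(* Main.v *)
Require Import Defs.
From Stdlib Require Import Reals Lra Psatz.
From Coquelicot Require Import Coquelicot.
Open Scope R_scope.

Lemma abs_le_of_sq a r : 0 <= r -> a^2 <= r^2 -> Rabs a <= r.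
Proof. intros H H0. rewrite <- pow2_abs in H0. pose proof (Rabs_pos a). nra. Qed.

Lemma sq_le_of_abs a r : Rabs a <= r -> a^2 <= r^2.
Proof. intros H. rewrite <- pow2_abs. pose proof (Rabs_pos a). nra. Qed.

Theorem proposition4 (t1 t2 b x y : R) :
  t1 < t2 -> 1 < b -> 0 < y ->
  cmod (x - (t1 + t2) / 2) y >= b * ((t2 - t1) / 2) ->
  omega_interval x y t1 t2
    >= (b - 1) / (2 * PI * b) * ((t2 - t1) * y /
         (cmod x y ^ 2 - x * (t1 + t2) + t1 * t2))
  /\
  (b - 1) / (2 * PI * b) * ((t2 - t1) * y /
         (cmod x y ^ 2 - x * (t1 + t2) + t1 * t2))
    >= (b - 1) / (2 * PI * b) * ((t2 - t1) * y /
         ((cmod x y + Rabs t1) * (cmod x y + Rabs t2))).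
Proof.
  intros Ht Hb Hy Hr.
  set (h := (t2 - t1) / 2). set (m := (t1 + t2) / 2).
  fold m h in Hr.
  set (r := cmod (x - m) y) in *.
  assert (Hr2 : r ^ 2 = (x - m) ^ 2 + y ^ 2).
  { unfold r, cmod. rewrite pow2_sqrt; [reflexivity|]. apply Rplus_le_le_0_compat; apply pow2_ge_0. }
  assert (Hr0 : 0 <= r) by (unfold r, cmod; apply sqrt_pos).
  set (rho := cmod x y).
  assert (Hrho2 : rho ^ 2 = x ^ 2 + y ^ 2).
  { unfold rho, cmod. rewrite pow2_sqrt; [reflexivity|]. apply Rplus_le_le_0_compat; apply pow2_ge_0. }
  assert (Hrho0 : 0 <= rho) by (unfold rho, cmod; apply sqrt_pos).
  assert (Hh : 0 < h) by (unfold h; lra).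
  assert (HD : rho ^ 2 - x * (t1 + t2) + t1 * t2 = r ^ 2 - h ^ 2).
  { rewrite Hrho2, Hr2. unfold m, h. field. }
  rewrite HD.
  assert (Hrh : h < r) by nra.
  assert (HPI := PI_RGT_0).
  assert (HDp : 0 < r ^ 2 - h ^ 2) by nra.
  split.
  -
    set (c := y / (PI * (r + h) ^ 2)).
    assert (Hle : RInt (fun _ => c) t1 t2 <= omega_interval x y t1 t2).
    { unfold omega_interval. apply RInt_le; [lra | apply ex_RInt_const | |].
      - apply (@ex_RInt_continuous R_CompleteNormedModule). intros z _. apply (@ex_derive_continuous R_AbsRing R_NormedModule).
        unfold poisson. auto_derive. assert (0 < y*(y*1)) by nra. assert (0 <= (z + - x)*((z + -x)*1)) by (rewrite Rmult_1_r; apply Rle_0_sqr). apply Rgt_not_eq; lra.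
      - intros t Htt. unfold poisson, c.
        assert (Hq : 0 < (t - x) ^ 2 + y ^ 2) by (assert (0 <= (t-x)^2) by apply pow2_ge_0; assert (0 < y^2) by (apply pow_lt; lra); lra).
        assert (Hb2 : (t - x) ^ 2 + y ^ 2 <= (r + h) ^ 2).
        { assert (Habs : Rabs (x - m) <= r).
          { apply abs_le_of_sq; [lra|]. rewrite Hr2. assert (0 <= y^2) by apply pow2_ge_0; lra. }
          assert (Htm : Rabs (t - m) <= h).
          { apply Rabs_le. unfold m, h. lra. }
          replace ((t - x) ^ 2 + y ^ 2) with ((t - m) ^ 2 - 2 * (t - m) * (x - m) + r ^ 2) by (rewrite Hr2; ring).
          assert (Hp : (t - m) * (x - m) >= - (h * r)).
          { assert (Rabs ((t - m) * (x - m)) <= h * r).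
            { rewrite Rabs_mult. apply Rmult_le_compat; auto using Rabs_pos. }
            apply Rabs_le_between in H. lra. }
          assert ((t - m) ^ 2 <= h ^ 2) by (apply sq_le_of_abs; exact Htm).
          nra. }
        unfold Rdiv. rewrite Rinv_mult.
        replace (/ PI * (y * / ((t - x) ^ 2 + y ^ 2))) with (y * / PI * / ((t - x) ^ 2 + y ^ 2)) by ring.
        replace (y * (/ PI * / (r + h) ^ 2)) with (y * / PI * / (r + h) ^ 2) by ring.
        apply Rmult_le_compat_l.
        + apply Rlt_le, Rmult_lt_0_compat; [lra | apply Rinv_0_lt_compat; lra].
        + apply Rinv_le_contravar; lra. }
    rewrite RInt_const in Hle. unfold scal in Hle; simpl in Hle.
    unfold mult in Hle; simpl in Hle.
    apply Rle_ge. eapply Rle_trans; [| exact Hle].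
    unfold c. replace (t2 - t1) with (2 * h) by (unfold h; field).
    assert (Hk : 0 <= 2 * b * (r - h) - (b - 1) * (r + h)) by nra.
    assert (Hrhp : 0 < r + h) by lra.
    apply Rge_le, Rminus_ge.
    assert (Hsq : r ^ 2 - h ^ 2 = (r - h) * (r + h)) by ring.
    rewrite Hsq.
    replace (2 * h * (y / (PI * (r + h) ^ 2)) -
      (b - 1) / (2 * PI * b) * (2 * h * y / ((r - h) * (r + h))))
      with ((h * y / PI) * ((2 * b * (r - h) - (b - 1) * (r + h)) / (b * (r - h) * (r + h) ^ 2))).
    2:{ field. repeat split; apply Rgt_not_eq; lra. }
    apply Rle_ge, Rmult_le_pos.
    { apply Rlt_le, Rdiv_lt_0_compat; [apply Rmult_lt_0_compat|]; lra. }
    apply Rmult_le_pos; [lra|]. apply Rlt_le, Rinv_0_lt_compat.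
    apply Rmult_lt_0_compat; [apply Rmult_lt_0_compat; lra|]. apply pow_lt; lra.
  - apply Rle_ge. apply Rmult_le_compat_l.
    { apply Rlt_le, Rdiv_lt_0_compat; [lra|]. apply Rmult_lt_0_compat; [apply Rmult_lt_0_compat|]; lra. }
    unfold Rdiv. apply Rmult_le_compat_l; [apply Rmult_le_pos; lra|].
    apply Rinv_le_contravar; [lra|].
    replace (r ^ 2 - h ^ 2) with (rho ^ 2 - x * (t1 + t2) + t1 * t2) by exact HD.
    assert (Hx : Rabs x <= rho).
    { apply abs_le_of_sq; [lra|]. rewrite Hrho2. assert (0 <= y^2) by apply pow2_ge_0; lra. }
    assert (- (x * t1) <= rho * Rabs t1).
    { assert (Rabs (x * t1) <= rho * Rabs t1) by (rewrite Rabs_mult; apply Rmult_le_compat_r; auto using Rabs_pos).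
      apply Rabs_le_between in H. lra. }
    assert (- (x * t2) <= rho * Rabs t2).
    { assert (Rabs (x * t2) <= rho * Rabs t2) by (rewrite Rabs_mult; apply Rmult_le_compat_r; auto using Rabs_pos).
      apply Rabs_le_between in H0. lra. }
    assert (t1 * t2 <= Rabs t1 * Rabs t2).
    { rewrite <- Rabs_mult. apply Rle_abs. }
    nra.
Qed.
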